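(* Any sequence $g_1,g_2,\dots\in\mathrm{PGL}_n(\mathbb C)$ contains a subsequence that converges to some point of $\mathrm{Hinge}^*_n$, in the following sense: there is a hinge $(P_1,\dots,P_k)$ and, for each $\sigma=1,\dots,k$, a sequence $\beta^{(\sigma)}_j\in\mathbb C^*$, such that (for representatives of the $g_j$ in $\mathrm{GL}_n(\mathbb C)$ along the subsequence) $\mathrm{graph}(\beta^{(\sigma)}_jg_j)$ converges to $P_\sigma$ in the Grassmannian $\mathrm{Gr}_n$ of $n$-dimensional subspaces of $\mathbb C^n\oplus\mathbb C^n$, for every $\sigma$.
   Context: Let $V=\mathbb C^n$. For a linear subspace (linear relation) $P\subset V\oplus V$: $\mathrm{Ker}\,P=\{v: v\oplus0\in P\}$, $\mathrm{Dom}\,P$ and $\mathrm{Im}\,P$ are the projections of $P$ to the first and second summands, $\mathrm{Indef}\,P=\{w:0\oplus w\in P\}$, $\mathrm{rk}\,P=\dim\mathrm{Dom}\,P-\dim\mathrm{Ker}\,P$. A hinge is a sequence $(P_1,\dots,P_k)$ of $n$-dimensional subspaces of $V\oplus V$ such that $\mathrm{Ker}\,P_j=\mathrm{Dom}\,P_{j+1}$ and $\mathrm{Im}\,P_j=\mathrm{Indef}\,P_{j+1}$ for $1\le j\le k-1$, $\mathrm{Dom}\,P_1=V$, $\mathrm{Im}\,P_k=V$, and $\mathrm{rk}\,P_j>0$ for all $j$. $\mathrm{Hinge}^*_n$ is the set of hinges modulo $(P_1,\dots,P_k)\sim(c_1P_1,\dots,c_kP_k)$, $c_j\in\mathbb C^*$,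 where $c\cdot P=\{v\oplus cw:v\oplus w\in P\}$. The graph of an operator $A$ is $\{v\oplus Av\}$. *)

(* Defs.v *)
(* C = R[i] (complex R) for an arbitrary realType R
   (complete archimedean ordered field, i.e. the reals up to isomorphism). *)
From HB Require Import structures.
From mathcomp Require Import all_boot all_order all_algebra.
From mathcomp Require Import reals complex.
Set Implicit Arguments. Unset Strict Implicit. Unset Printing Implicit Defensive.
Import Order.TTheory GRing.Theory Num.Theory.
Local Open Scope ring_scope.

Section Hinges.
Variables (R : realType) (n : nat).
Local Notation C := (complex R).

(* A linear subspace P of V (+) V, V = C^n, is represented by a matrix whose
   row space is P; a vector v (+) w is the row vector row_mx v w. *)

Definition DomP (P : 'M[C]_(n + n)) : 'M[C]_(n + n, n) := lsubmx P.
Definition ImP (P : 'M[C]_(n + n)) : 'M[C]_(n + n, n) := rsubmx P.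
(* KerP P = {v | v (+) 0 \in P}: rows u *m P whose right block vanishes. *)
Definition KerP (P : 'M[C]_(n + n)) := kermx (rsubmx P) *m lsubmx P.
(* IndefP P = {w | 0 (+) w \in P}. *)
Definition IndefP (P : 'M[C]_(n + n)) := kermx (lsubmx P) *m rsubmx P.
Definition rk (P : 'M[C]_(n + n)) : nat := (\rank (DomP P) - \rank (KerP P))%N.

(* A hinge (P_0, ..., P_{k-1}) (indices shifted by one w.r.t. the paper). *)
Definition is_hinge (k : nat) (P : nat -> 'M[C]_(n + n)) : Prop :=
  [/\ (0 < k)%N,
      (forall s, (s < k)%N -> \rank (P s) = n /\ (0 < rk (P s))%N),
      (forall s, (s.+1 < k)%N ->
          (KerP (P s) == DomP (P s.+1))%MS /\ (ImP (P s) == IndefP (P s.+1))%MS),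
      (DomP (P 0%N) == (1%:M : 'M[C]_n))%MS &
      (ImP (P k.-1) == (1%:M : 'M[C]_n))%MS].

(* graph of the operator x |-> A x (column convention): the subspace
   {v (+) A v}; in row-vector form its rows are v (+) v A^T. *)
Definition graph (A : 'M[C]_n) : 'M[C]_(n, n + n) := row_mx 1%:M A^T.

Definition cvgC (u : nat -> C) (c : C) : Prop :=
  forall eps : R, 0 < eps ->
    exists N : nat, forall j, (N <= j)%N -> `|u j - c| < (eps%:C)%C.

Definition cvg_mx m p (F : nat -> 'M[C]_(m, p)) (F0 : 'M[C]_(m, p)) : Prop :=
  forall i j, cvgC (fun t => F t i j) (F0 i j).

(* Convergence in the Grassmannian Gr_n of n-dimensional subspaces of
   C^n (+) C^n (quotient topology of n-frames modulo GL_n): the subspaces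
   Q_t converge to P iff they admit n-frames converging to an n-frame of P. *)
Definition cvg_Gr m1 m2 (Q : nat -> 'M[C]_(m1, n + n)) (P : 'M[C]_(m2, n + n))
  : Prop :=
  exists (F : nat -> 'M[C]_(n, n + n)) (F0 : 'M[C]_(n, n + n)),
    [/\ forall t, (F t == Q t)%MS, (F0 == P)%MS & cvg_mx F F0].

End Hinges.

(* Main.v *)
From HB Require Import structures.
From mathcomp Require Import all_boot all_order all_algebra.
From mathcomp Require Import all_classical all_reals.
From mathcomp Require Import topology normedtype sequences.
From mathcomp Require Import fingroup perm complex ring lra.
Require Import Defs.
Import Order.TTheory GRing.Theory Num.Theory.
Import numFieldNormedType.Exports.
Set Implicit Arguments. Unset Strict Implicit. Unset Printing Implicit Defensive.
Local Open Scope ring_scope.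
Local Open Scope complex_scope.


Section Conv.
Variable R : realType.
Local Notation C := (complex R).

Definition nrm (z : C) : R := Num.sqrt (complex.Re z ^+ 2 + complex.Im z ^+ 2).

Lemma nrmE (z : C) : `|z| = (nrm z)%:C.
Proof. by rewrite normc_def. Qed.

Lemma nrm_ge0 z : 0 <= nrm z.
Proof. by rewrite -ler0c -nrmE. Qed.

Lemma nrmD x y : nrm (x + y) <= nrm x + nrm y.
Proof. by rewrite -lecR rmorphD /= -!nrmE ler_normD. Qed.

Lemma nrmM x y : nrm (x * y) = nrm x * nrm y.
Proof. by apply: complexI; rewrite rmorphM /= -!nrmE normrM. Qed.

Lemma nrmN x : nrm (- x) = nrm x.
Proof. by apply: complexI; rewrite -!nrmE normrN. Qed.

Lemma nrmB x y : nrm (x - y) = nrm (y - x).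
Proof. by rewrite -nrmN opprB. Qed.

Lemma nrm0 : nrm 0 = 0.
Proof. by apply: complexI; rewrite -!nrmE normr0. Qed.

Lemma nrm_eq0 x : (nrm x == 0) = (x == 0).
Proof. by rewrite -(inj_eq (@complexI _)) -nrmE normr_eq0. Qed.

Lemma nrmV x : nrm (x^-1) = (nrm x)^-1.
Proof. by apply: complexI; rewrite -!nrmE normfV nrmE fmorphV. Qed.

Lemma nrm_real (r : R) : nrm r%:C = `|r|.
Proof. by rewrite /nrm /= expr0n addr0 sqrtr_sqr. Qed.

Lemma nrm_Re z : `|complex.Re z| <= nrm z.
Proof.
rewrite /nrm -sqrtr_sqr; apply: ler_wsqrtr; rewrite lerDl; exact: sqr_ge0.
Qed.

Lemma nrm_Im z : `|complex.Im z| <= nrm z.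
Proof.
rewrite /nrm -sqrtr_sqr; apply: ler_wsqrtr; rewrite lerDr; exact: sqr_ge0.
Qed.

Lemma nrm_le_ReIm z : nrm z <= `|complex.Re z| + `|complex.Im z|.
Proof.
rewrite {1}[z]complexE; apply: (le_trans (nrmD _ _)).
by rewrite nrmM nrm_real nrm_real /nrm /= expr0n expr1n add0r sqrtr1 mul1r.
Qed.

Lemma cvgCE (u : nat -> C) c :
  cvgC u c <-> forall eps : R, 0 < eps -> exists N : nat, forall j, (N <= j)%N -> nrm (u j - c) < eps.
Proof.
split=> H eps e0; have [N HN] := H eps e0; exists N => j /HN.
  by rewrite nrmE ltcR.
by rewrite nrmE ltcR.
Qed.


Definition incr (f : nat -> nat) := forall j, (f j < f j.+1)%N.

Lemma incr_lt {f} : incr f -> forall i j, (i < j)%N -> (f i < f j)%N.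
Proof.
move=> hf i; elim=> // j IH; rewrite ltnS leq_eqVlt => /orP[/eqP ->|/IH h] //.
exact: ltn_trans h (hf j).
Qed.

Lemma incr_ge {f} : incr f -> forall j, (j <= f j)%N.
Proof. by move=> hf; elim=> // j IH; apply: leq_ltn_trans IH (hf j). Qed.

Lemma incr_comp {f g} : incr f -> incr g -> incr (fun j => f (g j)).
Proof. by move=> hf hg j; apply: incr_lt. Qed.

Lemma incr_id : incr id.
Proof. by []. Qed.

Lemma cvgC_ext (u v : nat -> C) c : cvgC u c -> (forall j, u j = v j) -> cvgC v c.
Proof. by move=> H e eps e0; have [N HN] := H eps e0; exists N => j /HN; rewrite e. Qed.

Lemma cvgC_sub (u : nat -> C) c f : incr f -> cvgC u c -> cvgC (fun j => u (f j)) c.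
Proof.
move=> hf H eps e0; have [N HN] := H eps e0; exists N => j hj.
by apply: HN; apply: leq_trans hj (incr_ge hf j).
Qed.

Lemma cvgC_cst (c : C) : cvgC (fun _ => c) c.
Proof. by move=> eps e0; exists 0%N => j _; rewrite subrr normr0 ltcR. Qed.

Lemma cvgC_add (u v : nat -> C) c d : cvgC u c -> cvgC v d -> cvgC (fun j => u j + v j) (c + d).
Proof.
move=> /cvgCE Hu /cvgCE Hv; apply/cvgCE => eps e0.
have e2 : 0 < eps / 2 by rewrite divr_gt0.
have [N1 H1] := Hu _ e2; have [N2 H2] := Hv _ e2.
exists (maxn N1 N2) => j; rewrite geq_max => /andP[j1 j2].
have -> : u j + v j - (c + d) = (u j - c) + (v j - d) by ring.
apply: (le_lt_trans (nrmD _ _)).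
have := H1 j j1; have := H2 j j2; lra.
Qed.

Lemma cvgC_opp (u : nat -> C) c : cvgC u c -> cvgC (fun j => - u j) (- c).
Proof.
move=> /cvgCE Hu; apply/cvgCE => eps e0; have [N HN] := Hu _ e0.
by exists N => j /HN; rewrite -opprD nrmN.
Qed.

Lemma cvgC_mul (u v : nat -> C) c d : cvgC u c -> cvgC v d -> cvgC (fun j => u j * v j) (c * d).
Proof.
move=> /cvgCE Hu /cvgCE Hv; apply/cvgCE => eps e0.
set a := nrm c; set b := nrm d.
have a0 : 0 <= a := nrm_ge0 _; have b0 : 0 <= b := nrm_ge0 _.
set del := Num.min 1 (eps / (a + b + 1)).
have d0 : 0 < del by rewrite lt_min ltr01 /= divr_gt0 // ltr_wpDl // addr_ge0.
have d1 : del <= 1 by rewrite ge_min lexx.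
have d2 : del * (a + b + 1) <= eps.
  rewrite -ler_pdivlMr ?ltr_wpDl ?addr_ge0 //; by rewrite ge_min lexx orbT.
have [N1 H1] := Hu _ d0; have [N2 H2] := Hv _ d0.
exists (maxn N1 N2) => j; rewrite geq_max => /andP[j1 j2].
have -> : u j * v j - c * d = (u j - c) * (v j - d) + (u j - c) * d + c * (v j - d) by ring.
apply: (le_lt_trans (nrmD _ _)); rewrite !nrmM.
have := nrmD ((u j - c) * (v j - d)) ((u j - c) * d); rewrite !nrmM.
have := H1 j j1; have := H2 j j2.
have := nrm_ge0 (u j - c); have := nrm_ge0 (v j - d).
rewrite -/a -/b.
set x := nrm (u j - c); set y := nrm (v j - d) => x0 y0 hy hx hxy.
nra.
Qed.

Lemma cvgC_sum (I : Type) (r : seq I) (P : pred I) (F : I -> nat -> C) (G : I -> C) :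
  (forall i, P i -> cvgC (F i) (G i)) ->
  cvgC (fun t => \sum_(i <- r | P i) F i t) (\sum_(i <- r | P i) G i).
Proof.
move=> H; elim: r => [|x r IH].
  by rewrite big_nil; refine (cvgC_ext (cvgC_cst (0:C)) _) => j; rewrite big_nil.
rewrite big_cons; case: ifP => Px.
  by refine (cvgC_ext (cvgC_add (H x Px) IH) _) => j; rewrite big_cons Px.
by refine (cvgC_ext IH _) => j; rewrite big_cons Px.
Qed.

Lemma cvgC_prod (I : Type) (r : seq I) (P : pred I) (F : I -> nat -> C) (G : I -> C) :
  (forall i, P i -> cvgC (F i) (G i)) ->
  cvgC (fun t => \prod_(i <- r | P i) F i t) (\prod_(i <- r | P i) G i).
Proof.
move=> H; elim: r => [|x r IH].
  by rewrite big_nil; refine (cvgC_ext (cvgC_cst (1:C)) _) => j; rewrite big_nil.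
rewrite big_cons; case: ifP => Px.
  by refine (cvgC_ext (cvgC_mul (H x Px) IH) _) => j; rewrite big_cons Px.
by refine (cvgC_ext IH _) => j; rewrite big_cons Px.
Qed.

Lemma cvgC_uniq (u : nat -> C) c d : cvgC u c -> cvgC u d -> c = d.
Proof.
move=> /cvgCE Hc /cvgCE Hd; apply/eqP; rewrite -subr_eq0 -nrm_eq0.
rewrite eq_le nrm_ge0 andbT; apply/ler_addgt0Pr => eps e0.
have e2 : 0 < eps / 2 by rewrite divr_gt0.
have [N1 H1] := Hc _ e2; have [N2 H2] := Hd _ e2.
have := H1 (maxn N1 N2) (leq_maxl _ _); have := H2 (maxn N1 N2) (leq_maxr _ _).
have -> : c - d = (u (maxn N1 N2) - d) - (u (maxn N1 N2) - c) by ring.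
have := nrmD (u (maxn N1 N2) - d) (- (u (maxn N1 N2) - c)); rewrite nrmN.
lra.
Qed.


Lemma BW_R (u : nat -> R) (K : R) :
  (forall j, `|u j| <= K) ->
  exists f : nat -> nat, incr f /\
    exists l : R, forall eps : R, 0 < eps -> exists N : nat, forall j, (N <= j)%N -> `|u (f j) - l| < eps.
Proof.
move=> hK.
have bnd : bounded_fun u.
  rewrite /bounded_near /=; near=> M => x _ /=.
  apply: (le_trans (hK x)); near: M; apply: nbhs_pinfty_ge; exact: num_real.
have [f finc fcv] := bolzano_weierstrass bnd.
exists f; split.
  by move=> j; have := finc j.+1 j; move=> /= H; rewrite ltnNge; apply/negP => H2; have : (f j.+1 <= f j)%O by []; rewrite H ltnn.
move/cvg_ex: fcv => [l fl]; exists l => eps e0.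
have := (cvgrPdist_lt _ _).1 fl eps e0.
case=> N _ HN; exists N => j hj.
rewrite distrC; exact: HN.
Unshelve. all: by end_near.
Qed.

Lemma BW_C (u : nat -> C) (K : R) : (forall j, nrm (u j) <= K) ->
  exists f, incr f /\ exists c, cvgC (fun j => u (f j)) c.
Proof.
move=> hK.
have [f1 [hf1 [l1 Hl1]]] := @BW_R (fun j => complex.Re (u j)) K (fun j => le_trans (nrm_Re _) (hK j)).
have [f2 [hf2 [l2 Hl2]]] := @BW_R (fun j => complex.Im (u (f1 j))) K (fun j => le_trans (nrm_Im (u (f1 j))) (hK (f1 j))).
exists (fun j => f1 (f2 j)); split; first exact: incr_comp.
exists (l1 +i* l2); apply/cvgCE => eps e0.
have e2 : 0 < eps/2 by rewrite divr_gt0.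
have [N1 H1] := Hl1 _ e2; have [N2 H2] := Hl2 _ e2.
exists (maxn N1 N2) => j; rewrite geq_max => /andP[j1 j2].
apply: le_lt_trans (nrm_le_ReIm _) _.
have h1 := H1 (f2 j) (leq_trans j1 (incr_ge hf2 j)); have h2 := H2 j j2.
move: h1 h2; case: (u (f1 (f2 j))) => a b /= h1 h2.
lra.
Qed.

Lemma extract (I : finType) (u : I -> nat -> C) (K : R) :
  (forall i t, nrm (u i t) <= K) ->
  exists f, incr f /\ forall i, exists c, cvgC (fun t => u i (f t)) c.
Proof.
move=> hK.
suff H : forall s : seq I, exists f, incr f /\ forall i, i \in s -> exists c, cvgC (fun t => u i (f t)) c.
  have [f [hf Hf]] := H (enum I); exists f; split => // i; apply: Hf; by rewrite mem_enum.
elim=> [|x s [f [hf Hf]]]; first by exists id; split => //; exact incr_id.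
have [f2 [hf2 [c Hc]]] := @BW_C (fun t => u x (f t)) K (fun t => hK x (f t)).
exists (fun t => f (f2 t)); split; first exact: incr_comp.
move=> i; rewrite in_cons => /orP[/eqP -> |/Hf [d Hd]]; first by exists c.
exists d; exact: (@cvgC_sub (fun t => u i (f t)) _ _ hf2 Hd).
Qed.

End Conv.


Section MxConv.
Variable R : realType.
Local Notation C := (complex R).

Lemma cvg_mx_sub m p (F : nat -> 'M[C]_(m, p)) F0 f : incr f -> cvg_mx F F0 -> cvg_mx (fun t => F (f t)) F0.
Proof. by move=> hf H i j; apply: (@cvgC_sub _ (fun t => F t i j)). Qed.

Lemma cvg_mx_cst m p (A : 'M[C]_(m, p)) : cvg_mx (fun _ => A) A.
Proof. by move=> i j; exact: cvgC_cst. Qed.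

Lemma cvg_mx_ext m p (F G : nat -> 'M[C]_(m, p)) F0 : cvg_mx F F0 -> (forall t, F t = G t) -> cvg_mx G F0.
Proof. by move=> H e i j; refine (cvgC_ext (H i j) _) => t; rewrite e. Qed.

Lemma cvg_mx_mul m n p (A : nat -> 'M[C]_(m, n)) (B : nat -> 'M[C]_(n, p)) A0 B0 :
  cvg_mx A A0 -> cvg_mx B B0 -> cvg_mx (fun t => A t *m B t) (A0 *m B0).
Proof.
move=> hA hB i j; rewrite mxE.
refine (cvgC_ext (cvgC_sum _ (fun k _ => cvgC_mul (hA i k) (hB k j))) _) => t.
by rewrite mxE.
Qed.

Lemma cvg_mx_scale m p (a : nat -> C) a0 (A : nat -> 'M[C]_(m, p)) A0 :
  cvgC a a0 -> cvg_mx A A0 -> cvg_mx (fun t => a t *: A t) (a0 *: A0).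
Proof.
move=> ha hA i j; rewrite mxE.
by refine (cvgC_ext (cvgC_mul ha (hA i j)) _) => t; rewrite mxE.
Qed.

Lemma cvg_det n (A : nat -> 'M[C]_n) A0 : cvg_mx A A0 -> cvgC (fun t => \det (A t)) (\det A0).
Proof.
move=> hA; rewrite /determinant.
apply: cvgC_sum => s _; apply: cvgC_mul; first exact: cvgC_cst.
by apply: cvgC_prod => i _; apply: hA.
Qed.

Lemma cvg_adj n (A : nat -> 'M[C]_n) A0 : cvg_mx A A0 -> cvg_mx (fun t => \adj (A t)) (\adj A0).
Proof.
move=> hA i j; rewrite mxE /cofactor.
refine (cvgC_ext (cvgC_mul (cvgC_cst _) (@cvg_det _ (fun t => row' j (col' i (A t))) _ _)) _).
  by move=> k l; rewrite !mxE; refine (cvgC_ext (hA _ _) _) => t; rewrite !mxE.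
by move=> t; rewrite mxE.
Qed.

Lemma cvg_inv n (A : nat -> 'M[C]_n) A0 : cvg_mx A A0 -> (forall t, \det (A t) ^+ 2 = 1) ->
  [/\ \det A0 ^+ 2 = 1, A0 \in unitmx & cvg_mx (fun t => invmx (A t)) (invmx A0)].
Proof.
move=> hA hd.
have d0 : \det A0 ^+ 2 = 1.
  apply: (@cvgC_uniq _ (fun t => \det (A t) ^+ 2)); last first.
    by refine (cvgC_ext (cvgC_cst 1) _) => t; rewrite hd.
  rewrite expr2; refine (cvgC_ext (cvgC_mul (cvg_det hA) (cvg_det hA)) _) => t.
  by rewrite expr2.
have inv_det : forall B : 'M[C]_n, \det B ^+ 2 = 1 -> B \in unitmx /\ invmx B = \det B *: \adj B.
  move=> B hB; have nz : \det B != 0 by apply/eqP => e; move: hB; rewrite e expr0n /= => /eqP; rewrite eq_sym oner_eq0.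
  have uB : B \in unitmx by rewrite unitmxE unitfE.
  split => //; rewrite /invmx uB; congr (_ *: _).
  by apply: (mulfI nz); rewrite divff // -expr2 hB.
have [u0 e0] := inv_det _ d0.
split => //; rewrite e0.
refine (cvg_mx_ext (cvg_mx_scale (cvg_det hA) (cvg_adj hA)) _) => t.
by rewrite (inv_det _ (hd t)).2.
Qed.

Lemma cvg_block m1 m2 n1 n2 (A : nat -> 'M[C]_(m1, n1)) (B : nat -> 'M[C]_(m1, n2))
  (Cc : nat -> 'M[C]_(m2, n1)) (D : nat -> 'M[C]_(m2, n2)) A0 B0 C0 D0 :
  cvg_mx A A0 -> cvg_mx B B0 -> cvg_mx Cc C0 -> cvg_mx D D0 ->
  cvg_mx (fun t => block_mx (A t) (B t) (Cc t) (D t)) (block_mx A0 B0 C0 D0).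
Proof.
move=> hA hB hC hD i j.
have -> : i = unsplit (fintype.split i) by rewrite splitK.
have -> : j = unsplit (fintype.split j) by rewrite splitK.
case: (fintype.split i) => i'; case: (fintype.split j) => j' /=.
- by rewrite block_mxEul; refine (cvgC_ext (hA i' j') _) => t; rewrite block_mxEul.
- by rewrite block_mxEur; refine (cvgC_ext (hB i' j') _) => t; rewrite block_mxEur.
- by rewrite block_mxEdl; refine (cvgC_ext (hC i' j') _) => t; rewrite block_mxEdl.
- by rewrite block_mxEdr; refine (cvgC_ext (hD i' j') _) => t; rewrite block_mxEdr.
Qed.

Lemma cvg_row_mx m n1 n2 (A : nat -> 'M[C]_(m, n1)) (B : nat -> 'M[C]_(m, n2)) A0 B0 :
  cvg_mx A A0 -> cvg_mx B B0 -> cvg_mx (fun t => row_mx (A t) (B t)) (row_mx A0 B0).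
Proof.
move=> hA hB i j.
have -> : j = unsplit (fintype.split j) by rewrite splitK.
case: (fintype.split j) => j' /=.
- by rewrite row_mxEl; refine (cvgC_ext (hA i j') _) => t; rewrite row_mxEl.
- by rewrite row_mxEr; refine (cvgC_ext (hB i j') _) => t; rewrite row_mxEr.
Qed.

Lemma cvg_diag n (x : nat -> 'I_n -> C) (x0 : 'I_n -> C) :
  (forall i, cvgC (fun t => x t i) (x0 i)) ->
  cvg_mx (fun t => diag_mx (\row_i x t i)) (diag_mx (\row_i x0 i)).
Proof.
move=> hx i j; rewrite !mxE -mulr_natr.
by refine (cvgC_ext (cvgC_mul (hx i) (cvgC_cst (1 *+ (i == j)))) _) => t; rewrite !mxE mulr_natr.
Qed.

End MxConv.


Section Decomp.
Variable R : realType.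
Local Notation C := (complex R).

Lemma fin_max (T : finType) (x0 : T) (f : T -> R) : exists x, forall y, f y <= f x.
Proof. by case: (@arg_maxP _ _ T x0 xpredT f isT) => x _ H; exists x => y; exact: H. Qed.

Lemma tperm_mx_invol n (i j : 'I_n) : (tperm_mx i j : 'M[C]_n) *m tperm_mx i j = 1%:M.
Proof. by rewrite /tperm_mx -perm_mxM tperm2 perm_mx1. Qed.

Lemma tperm_mxEl m n (i j : 'I_m) (A : 'M[C]_(m, n)) k l :
  (tperm_mx i j *m A) k l = A (tperm i j k) l.
Proof. by rewrite /tperm_mx -row_permE mxE. Qed.

Lemma tperm_mxEr m n (i j : 'I_n) (A : 'M[C]_(m, n)) k l :
  (A *m tperm_mx i j) k l = A k (tperm i j l).
Proof. by rewrite /tperm_mx -[tperm i j]tpermV -col_permE mxE tpermV. Qed.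

Lemma det_tperm_sq n (i j : 'I_n) : \det (tperm_mx i j : 'M[C]_n) ^+ 2 = 1.
Proof. by rewrite /tperm_mx det_perm sqrr_sign. Qed.

Lemma diag_split n (d : nat -> C) :
  diag_mx (\row_(i < 1 + n) d i) = block_mx (d 0%N)%:M 0 0 (diag_mx (\row_(i < n) d i.+1)).
Proof.
apply/matrixP => i j.
have -> : i = unsplit (fintype.split i) by rewrite splitK.
have -> : j = unsplit (fintype.split j) by rewrite splitK.
case: (fintype.split i) => i'; case: (fintype.split j) => j' /=.
- by rewrite block_mxEul !mxE !ord1 eqxx.
- by rewrite block_mxEur !mxE eq_lrshift.
- by rewrite block_mxEdl !mxE eq_sym eq_lrshift.
- by rewrite block_mxEdr !mxE eq_rshift.
Qed.

Lemma block_bound m1 m2 n1 n2 (A : 'M[C]_(m1, n1)) (B : 'M[C]_(m1, n2))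
  (Cc : 'M[C]_(m2, n1)) (D : 'M[C]_(m2, n2)) (K : R) :
  (forall i j, nrm (A i j) <= K) -> (forall i j, nrm (B i j) <= K) ->
  (forall i j, nrm (Cc i j) <= K) -> (forall i j, nrm (D i j) <= K) ->
  forall i j, nrm (block_mx A B Cc D i j) <= K.
Proof.
move=> hA hB hC hD i j.
have -> : i = unsplit (fintype.split i) by rewrite splitK.
have -> : j = unsplit (fintype.split j) by rewrite splitK.
case: (fintype.split i) => i'; case: (fintype.split j) => j' /=.
- by rewrite block_mxEul.
- by rewrite block_mxEur.
- by rewrite block_mxEdl.
- by rewrite block_mxEdr.
Qed.

Lemma nrm1_entries n (i j : 'I_n) : nrm ((1%:M : 'M[C]_n) i j) <= 1.
Proof. by rewrite mxE; case: (i == j); rewrite ?nrm0 ?ler01 //= -(rmorph1 (real_complex R)) nrm_real normr1. Qed.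

Lemma nrm0_entries m n (i : 'I_m) (j : 'I_n) : nrm ((0 : 'M[C]_(m, n)) i j) <= 1.
Proof. by rewrite mxE nrm0 ler01. Qed.

Lemma decomp n (M : 'M[C]_n) : exists (A B : 'M[C]_n) (d : nat -> C),
  [/\ M = A *m diag_mx (\row_(i < n) d i) *m B,
      (forall i j, nrm (A i j) <= 1 /\ nrm (B i j) <= 1),
      \det A ^+ 2 = 1 /\ \det B ^+ 2 = 1,
      (forall k, (k.+1 < n)%N -> nrm (d k.+1) <= 2 * nrm (d k)) &
      ((0 < n)%N -> exists i j, d 0%N = M i j)].
Proof.
elim: n M => [|n IH] M.
  exists 1%:M, 1%:M, (fun _ => 0); split => //.
  - by apply/matrixP => [[]].
  - by move=> [].
  - by rewrite det1 expr1n.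
have [[p q] Hpq] := @fin_max _ (ord0, ord0) (fun x : 'I_n.+1 * 'I_n.+1 => nrm (M x.1 x.2)).
set m := M p q.
have Hm : forall i j, nrm (M i j) <= nrm m by move=> i j; exact: (Hpq (i, j)).
have [m0|m0] := eqVneq m 0.
  have M0 : M = 0.
    apply/matrixP => i j; rewrite mxE; apply/eqP; rewrite -nrm_eq0 eq_le nrm_ge0 andbT.
    by have := Hm i j; rewrite m0 nrm0.
  exists 1%:M, 1%:M, (fun _ => 0); split.
  - by rewrite mul1mx mulmx1 M0; apply/matrixP => i j; rewrite !mxE mul0rn.
  - by move=> i j; rewrite !nrm1_entries.
  - by rewrite det1 expr1n.
  - by move=> k _; rewrite nrm0 mulr0.
  - by move=> _; exists p, q; rewrite -/m m0.
pose T1 := (tperm_mx ord0 p : 'M[C]_n.+1).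
pose T2 := (tperm_mx ord0 q : 'M[C]_n.+1).
pose M1 : 'M[C]_(1 + n) := T1 *m M *m T2.
have M1E : forall i j, M1 i j = M (tperm ord0 p i) (tperm ord0 q j).
  by move=> i j; rewrite /M1 tperm_mxEr tperm_mxEl.
have HM1 : forall i j, nrm (M1 i j) <= nrm m by move=> i j; rewrite M1E.
have M100 : ulsubmx M1 = m%:M.
  have ul : forall A : 'M[C]_(1 + n), ulsubmx A 0 0 = A ord0 ord0.
    by move=> A; rewrite !mxE; congr (A _ _); apply: val_inj.
  by rewrite [ulsubmx M1]mx11_scalar ul M1E !tpermL.
pose r := ursubmx M1; pose c := dlsubmx M1; pose N0 := drsubmx M1.
pose S := N0 - m^-1 *: (c *m r).
have Hc : forall k l, nrm (c k l) <= nrm m.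
  have dl : forall (A : 'M[C]_(1 + n)) k l, dlsubmx A k l = A (rshift 1 k) (lshift n l).
    by move=> A k l; rewrite !mxE.
  by move=> k l; rewrite /c dl.
have Hr : forall k l, nrm (r k l) <= nrm m.
  have ur : forall (A : 'M[C]_(1 + n)) k l, ursubmx A k l = A (lshift n k) (rshift 1 l).
    by move=> A k l; rewrite !mxE.
  by move=> k l; rewrite /r ur.
have nm0 : 0 < nrm m by rewrite lt_def nrm_eq0 m0 nrm_ge0.
have HS : forall i j, nrm (S i j) <= 2 * nrm m.
  have Sent : forall (A : 'M[C]_(1 + n)) (k : C) i j, (drsubmx A - k *: (dlsubmx A *m ursubmx A)) i j
     = A (rshift 1 i) (rshift 1 j) - k * (A (rshift 1 i) (lshift n 0) * A (lshift n 0) (rshift 1 j)).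
    by move=> A k i j; rewrite !mxE big_ord1 !mxE.
  move=> i j; rewrite /S Sent.
  set x := nrm m.
  have ha := HM1 (rshift 1 i) (lshift n 0); have hb := HM1 (lshift n 0) (rshift 1 j).
  have hN := HM1 (rshift 1 i) (rshift 1 j).
  set a := M1 (rshift 1 i) (lshift n 0) in ha *; set b := M1 (lshift n 0) (rshift 1 j) in hb *.
  apply: (le_trans (nrmD _ _)); rewrite nrmN !nrmM nrmV -/x.
  have h1 : x^-1 * nrm a <= 1 by rewrite ler_pdivrMl // mulr1.
  have := nrm_ge0 b; have := nrm_ge0 a; have : 0 <= x^-1 by rewrite invr_ge0 ltW.
  move: hN ha hb; rewrite -/x; clearbody x; nra.
have [A' [B' [d' [eS hAB' [hdA' hdB'] hrat' hd0']]]] := IH S.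
pose d := fun k => if k is k'.+1 then d' k' else m.
pose A1 : 'M[C]_(1 + n) := block_mx 1%:M 0 (m^-1 *: c) A'.
pose B1 : 'M[C]_(1 + n) := block_mx 1%:M (m^-1 *: r) 0 B'.
have M1E2 : M1 = A1 *m diag_mx (\row_(i < 1 + n) d i) *m B1.
  rewrite diag_split.
  change (diag_mx (\row_(i < n) d i.+1)) with (diag_mx (\row_(i < n) d' i)).
  have e1 : (m^-1 *: c) *m m%:M = c by rewrite mul_mx_scalar scalerA mulfV // scale1r.
  have e2 : m%:M *m (m^-1 *: r) = r by rewrite mul_scalar_mx scalerA mulfV // scale1r.
  rewrite /A1 /B1 !mulmx_block !mul1mx !mul0mx !mulmx0 !addr0 !add0r e1 !mulmx1 e2.
  rewrite -eS /S -scalemxAr [_ + (N0 - _)]addrC subrK.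
  by rewrite -M100 mul0mx addr0 submxK.
have ME : M = T1 *m M1 *m T2.
  by rewrite /M1 !mulmxA tperm_mx_invol mul1mx -mulmxA tperm_mx_invol mulmx1.
exists (T1 *m A1), (B1 *m T2), d; split.
- by rewrite ME M1E2 !mulmxA.
- move=> i j; rewrite tperm_mxEl tperm_mxEr; split.
    apply: block_bound => // [k l|k l|k l|k l]; rewrite ?nrm1_entries ?nrm0_entries //.
      by rewrite mxE nrmM nrmV ler_pdivrMl // mulr1 Hc.
    by case: (hAB' k l).
  apply: block_bound => // [k l|k l|k l|k l]; rewrite ?nrm1_entries ?nrm0_entries //.
    by rewrite mxE nrmM nrmV ler_pdivrMl // mulr1 Hr.
  by case: (hAB' k l).
- have dA1 : \det A1 = \det A' by rewrite /A1 det_lblock det1 mul1r.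
  have dB1 : \det B1 = \det B' by rewrite /B1 det_ublock det1 mul1r.
  rewrite !det_mulmx !exprMn dA1 dB1 hdA' hdB'.
  by rewrite !det_tperm_sq !mulr1.
- case=> [|k] hk /=.
    have [i [j ->]] := hd0' hk; exact: HS.
  exact: hrat'.
- by move=> _; exists p, q.
Qed.

End Decomp.


Section RowSpace.
Variable F : fieldType.

Lemma eqmx_vec m1 m2 n (X : 'M[F]_(m1, n)) (Y : 'M[F]_(m2, n)) :
  (forall v : 'rV[F]_n, (v <= X)%MS <-> (v <= Y)%MS) -> (X == Y)%MS.
Proof.
move=> H; apply/andP; split; apply/row_subP => i; apply/H; exact: row_sub.
Qed.

Lemma col0_sub m1 m2 n (G : 'M[F]_(m1, n)) (x : 'rV[F]_n) :
  (x <= col_mx G (0 : 'M_(m2, n)))%MS = (x <= G)%MS.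
Proof. by rewrite -(addsmxE G (0 : 'M_(m2, n))) addsmx0. Qed.

Lemma rank_col0 m1 m2 n (G : 'M[F]_(m1, n)) : \rank (col_mx G (0 : 'M_(m2, n))) = \rank G.
Proof. by rewrite -(addsmxE G (0 : 'M_(m2, n))) addsmx0. Qed.

Lemma eqmx_col0 m1 m2 n (G : 'M[F]_(m1, n)) : (col_mx G (0 : 'M_(m2, n)) == G)%MS.
Proof. by apply: eqmx_vec => v; rewrite col0_sub. Qed.

Lemma sub_mulinv m n (x : 'rV[F]_n) (G : 'M[F]_(m, n)) (T T' : 'M[F]_n) :
  T *m T' = 1%:M -> T' *m T = 1%:M -> (x <= G *m T)%MS = (x *m T' <= G)%MS.
Proof.
move=> e e'; apply/idP/idP.
  case/submxP=> U ->; rewrite -!mulmxA e mulmx1; exact: submxMl.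
case/submxP=> U e2.
have -> : x = x *m T' *m T by rewrite -mulmxA e' mulmx1.
by rewrite e2 -mulmxA; exact: submxMl.
Qed.

Lemma dom_char m n (P : 'M[F]_(m, n + n)) (v : 'rV[F]_n) :
  (v <= lsubmx P)%MS <-> exists w, (row_mx v w <= P)%MS.
Proof.
split.
  case/submxP=> U ->; exists (U *m rsubmx P).
  by rewrite -mul_mx_row hsubmxK submxMl.
case=> w /submxP [U e]; have := congr1 lsubmx e.
by rewrite row_mxKl -{1}[P]hsubmxK mul_mx_row row_mxKl => ->; exact: submxMl.
Qed.

Lemma im_char m n (P : 'M[F]_(m, n + n)) (w : 'rV[F]_n) :
  (w <= rsubmx P)%MS <-> exists v, (row_mx v w <= P)%MS.
Proof.
split.
  case/submxP=> U ->; exists (U *m lsubmx P).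
  by rewrite -mul_mx_row hsubmxK submxMl.
case=> v /submxP [U e]; have := congr1 rsubmx e.
by rewrite row_mxKr -{1}[P]hsubmxK mul_mx_row row_mxKr => ->; exact: submxMl.
Qed.

Lemma ker_char m n (P : 'M[F]_(m, n + n)) (v : 'rV[F]_n) :
  (v <= kermx (rsubmx P) *m lsubmx P)%MS <-> (row_mx v 0 <= P)%MS.
Proof.
split.
  case/submxP=> U ->; set W := U *m kermx (rsubmx P).
  have -> : (0 : 'rV_n) = W *m rsubmx P by rewrite /W -mulmxA mulmx_ker mulmx0.
  by rewrite mulmxA -mul_mx_row hsubmxK submxMl.
case/submxP=> U e.
have e1 := congr1 lsubmx e; have e2 := congr1 rsubmx e.
rewrite row_mxKl -{1}[P]hsubmxK mul_mx_row row_mxKl in e1.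
rewrite row_mxKr -{1}[P]hsubmxK mul_mx_row row_mxKr in e2.
have /submxP [U' eU] : (U <= kermx (rsubmx P))%MS by apply/sub_kermxP; rewrite -e2.
by rewrite e1 eU -mulmxA; exact: submxMl.
Qed.

Lemma indef_char m n (P : 'M[F]_(m, n + n)) (w : 'rV[F]_n) :
  (w <= kermx (lsubmx P) *m rsubmx P)%MS <-> (row_mx 0 w <= P)%MS.
Proof.
split.
  case/submxP=> U ->; set W := U *m kermx (lsubmx P).
  have -> : (0 : 'rV_n) = W *m lsubmx P by rewrite /W -mulmxA mulmx_ker mulmx0.
  by rewrite mulmxA -mul_mx_row hsubmxK submxMl.
case/submxP=> U e.
have e1 := congr1 lsubmx e; have e2 := congr1 rsubmx e.
rewrite row_mxKl -{1}[P]hsubmxK mul_mx_row row_mxKl in e1.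
rewrite row_mxKr -{1}[P]hsubmxK mul_mx_row row_mxKr in e2.
have /submxP [U' eU] : (U <= kermx (lsubmx P))%MS by apply/sub_kermxP; rewrite -e1.
by rewrite e2 eU -mulmxA; exact: submxMl.
Qed.

Lemma diag_frame_char n (X Y x y : 'rV[F]_n) :
  (row_mx x y <= row_mx (diag_mx X) (diag_mx Y))%MS <->
  forall i, exists u, x 0 i = u * X 0 i /\ y 0 i = u * Y 0 i.
Proof.
split.
  case/submxP=> U; rewrite mul_mx_row => /eq_row_mx [-> ->] i.
  by exists (U 0 i); rewrite !mul_mx_diag !mxE.
move=> H; have [u hu] := fin_all_exists H.
apply/submxP; exists (\row_i u i); rewrite mul_mx_row.
congr row_mx; apply/matrixP => i j; rewrite ord1 mul_mx_diag !mxE; by case: (hu j).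
Qed.

Lemma dom_diag n (X Y x : 'rV[F]_n) :
  (exists y, (row_mx x y <= row_mx (diag_mx X) (diag_mx Y))%MS) <->
  forall i, X 0 i = 0 -> x 0 i = 0.
Proof.
split.
  by case=> y /diag_frame_char H i Xi; have [u [-> _]] := H i; rewrite Xi mulr0.
move=> H; exists (\row_i (x 0 i / X 0 i * Y 0 i)); apply/diag_frame_char => i.
have [Xi|Xi] := eqVneq (X 0 i) 0.
  by exists 0; rewrite H // mxE Xi invr0 !mulr0 !mul0r.
by exists (x 0 i / X 0 i); rewrite mxE divfK.
Qed.

Lemma im_diag n (X Y y : 'rV[F]_n) :
  (exists x, (row_mx x y <= row_mx (diag_mx X) (diag_mx Y))%MS) <->
  forall i, Y 0 i = 0 -> y 0 i = 0.
Proof.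
split.
  by case=> x /diag_frame_char H i Yi; have [u [_ ->]] := H i; rewrite Yi mulr0.
move=> H; exists (\row_i (y 0 i / Y 0 i * X 0 i)); apply/diag_frame_char => i.
have [Yi|Yi] := eqVneq (Y 0 i) 0.
  by exists 0; rewrite H // mxE Yi invr0 !mulr0 !mul0r.
by exists (y 0 i / Y 0 i); rewrite mxE divfK.
Qed.

Lemma ker_diag n (X Y x : 'rV[F]_n) :
  (row_mx x 0 <= row_mx (diag_mx X) (diag_mx Y))%MS <->
  forall i, (X 0 i == 0) || (Y 0 i != 0) -> x 0 i = 0.
Proof.
split.
  move/diag_frame_char => H i /orP [/eqP Xi|Yi]; have [u [-> e]] := H i.
    by rewrite Xi mulr0.
  move: e; rewrite mxE => /esym /eqP; rewrite mulf_eq0 (negPf Yi) orbF => /eqP ->.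
  by rewrite mul0r.
move=> H; apply/diag_frame_char => i.
have [Xi|Xi] := eqVneq (X 0 i) 0.
  by exists 0; rewrite H ?Xi ?eqxx // mxE !mul0r.
have [Yi|Yi] := eqVneq (Y 0 i) 0.
  by exists (x 0 i / X 0 i); rewrite divfK // Yi mulr0 mxE.
by exists 0; rewrite H ?Yi ?orbT // mxE !mul0r.
Qed.

Lemma indef_diag n (X Y y : 'rV[F]_n) :
  (row_mx 0 y <= row_mx (diag_mx X) (diag_mx Y))%MS <->
  forall i, (Y 0 i == 0) || (X 0 i != 0) -> y 0 i = 0.
Proof.
split.
  move/diag_frame_char => H i /orP [/eqP Yi|Xi]; have [u [e ->]] := H i.
    by rewrite Yi mulr0.
  move: e; rewrite mxE => /esym /eqP; rewrite mulf_eq0 (negPf Xi) orbF => /eqP ->.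
  by rewrite mul0r.
move=> H; apply/diag_frame_char => i.
have [Yi|Yi] := eqVneq (Y 0 i) 0.
  by exists 0; rewrite H ?Yi ?eqxx // mxE !mul0r.
have [Xi|Xi] := eqVneq (X 0 i) 0.
  by exists (y 0 i / Y 0 i); rewrite divfK // Xi mulr0 mxE.
by exists 0; rewrite H ?Xi ?orbT // mxE !mul0r.
Qed.

End RowSpace.


Section Blocks.
Variable F : fieldType.
Variable rl : nat -> F.

Definition blk i := count (fun k => rl k == 0%R :> F) (iota 0 i).

Lemma blk_diff i j : (i <= j)%N -> blk j = (blk i + count (fun k => rl k == 0%R :> F) (iota i (j - i)))%N.
Proof. by move=> hij; rewrite /blk -{1}(subnKC hij) iotaD count_cat. Qed.

Lemma blk_mono i j : (i <= j)%N -> (blk i <= blk j)%N.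
Proof. by move=> hij; rewrite (blk_diff hij) leq_addr. Qed.

Lemma blkS i : (blk i.+1 <= (blk i).+1)%N.
Proof.
rewrite (blk_diff (leqnSn i)) subSnn /= addn0 -addn1 leq_add2l.
by case: (rl i == 0).
Qed.

Lemma prod_zero a i : (a <= i)%N -> (\prod_(a <= k < i) rl k == 0 :> F)%R = (blk a < blk i)%N.
Proof.
move=> hai; rewrite prodf_seq_eq0 (blk_diff hai) /index_iota -{1}(addn0 (blk a)) ltn_add2l.
by rewrite has_count.
Qed.

Lemma blk_ivt s m : (s <= blk m)%N -> exists i, (i <= m)%N /\ blk i = s.
Proof.
elim: m => [|m IH] hs.
  by exists 0%N; split => //; apply/eqP; rewrite eqn_leq hs /=.
case: (leqP s (blk m)) => h.
  by have [i [hi e]] := IH h; exists i; split => //; apply: leq_trans hi (leqnSn m).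
exists m.+1; split => //; apply/eqP; rewrite eqn_leq hs andbT.
by apply: leq_trans (blkS m) _.
Qed.

Definition bstart (n s : nat) := find (fun i => blk i == s) (iota 0 n).

Lemma bstart_props n s : (0 < n)%N -> (s <= blk n.-1)%N ->
  [/\ (bstart n s < n)%N, blk (bstart n s) = s &
      forall i, (i < n)%N -> (blk i < s)%N = (i < bstart n s)%N].
Proof.
move=> n0 hs.
have hasP : has (fun i => blk i == s) (iota 0 n).
  have [i [hi e]] := blk_ivt hs; apply/hasP; exists i; last by rewrite e.
  by rewrite mem_iota add0n (leq_ltn_trans hi) // prednK.
have lt : (bstart n s < n)%N by rewrite -[X in (_ < X)%N](size_iota 0 n) -has_find.
have e : blk (bstart n s) = s.
  by have := nth_find 0%N hasP; rewrite -/(bstart n s) nth_iota // add0n => /eqP.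
split => // i hi; apply/idP/idP => h.
  by rewrite ltnNge; apply/negP => /blk_mono; rewrite e leqNgt h.
have := before_find 0%N h; rewrite nth_iota ?add0n; last exact: ltn_trans h lt.
move=> ne; rewrite ltn_neqAle ne /= -e; apply: blk_mono; exact: ltnW.
Qed.

End Blocks.


Lemma telescope (F : fieldType) (d : nat -> F) a i : (a <= i)%N ->
  (forall k, (a <= k <= i)%N -> d k != 0) ->
  d i / d a = \prod_(a <= k < i) (d k.+1 / d k).
Proof.
elim: i => [|i IH] hai hd.
  move: hai hd; rewrite leqn0 => /eqP -> hd.
  by rewrite big_geq // divff // hd.
case: (leqP a i) => h.
  rewrite big_nat_recr //= -IH //; last by move=> k /andP[k1 k2]; apply: hd; rewrite k1 ltnW.
  by rewrite [RHS]mulrC [RHS]mulrA divfK // hd // h /=.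
have e : a = i.+1 by apply/eqP; rewrite eqn_leq hai h.
by rewrite e big_geq // divff // hd // e leqnn.
Qed.

Lemma cvgC_prod_nat (R : realType) (lo hi : nat) (Fn : nat -> nat -> complex R) (Gn : nat -> complex R) :
  (forall k, (lo <= k < hi)%N -> cvgC (Fn k) (Gn k)) ->
  cvgC (fun t => \prod_(lo <= k < hi) Fn k t) (\prod_(lo <= k < hi) Gn k).
Proof.
move=> H; rewrite big_nat_cond.
have H' : forall k, (lo <= k < hi)%N && true -> cvgC (Fn k) (Gn k) by move=> k; rewrite andbT; exact: H.
by refine (cvgC_ext (cvgC_prod _ H') _) => t; rewrite [in RHS]big_nat_cond.
Qed.

Lemma trmxZ' (F : fieldType) n (a : F) (A : 'M[F]_n) : (a *: A)^T = a *: A^T.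
Proof. by apply/matrixP => i j; rewrite !mxE. Qed.

Theorem lemma2p1 (R : realType) (n : nat) (hn : (0 < n)%N)
    (g : nat -> 'M[complex R]_n) (hg : forall j, g j \in unitmx) :
  exists (phi : nat -> nat) (k : nat) (P : nat -> 'M[complex R]_(n + n))
         (beta : nat -> nat -> complex R),
    [/\ (forall j, (phi j < phi j.+1)%N),
        is_hinge k P,
        (forall s j, (s < k)%N -> beta s j != 0) &
        (forall s, (s < k)%N ->
           cvg_Gr (fun j => graph (beta s j *: g (phi j))) (P s))].
Proof.
case: n hn g hg => [//|n] _ g hg.
pose M j := (g j)^T.
have [fA HA] := choice (fun j => decomp (M j)).
have [fB HB] := choice HA.
have [fd Hd] := choice HB.
have dnz : forall j (i : nat), (i < n.+1)%N -> fd j i != 0.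
  move=> j i hi; have [eM _ _ _ _] := Hd j.
  have : \det (M j) != 0 by rewrite det_tr -unitfE -unitmxE.
  rewrite eM !det_mulmx det_diag !mulf_eq0 negb_or => /andP[/norP [_ hp] _].
  apply: contraNneq hp => e; apply/prodf_eq0; exists (Ordinal hi) => //.
  by rewrite mxE e.
pose rho j k := if (k.+1 < n.+1)%N then fd j k.+1 / fd j k else 0.
have rho_bd : forall j k, nrm (rho j k) <= 2.
  move=> j k; rewrite /rho; case: ifP => hk; last by rewrite nrm0 ler0n.
  have [_ _ _ hr _] := Hd j.
  have h0 : 0 < nrm (fd j k) by rewrite lt_def nrm_eq0 dnz ?nrm_ge0 // ltnW.
  by rewrite nrmM nrmV ler_pdivrMr // hr.
pose I := (('I_n.+1 * 'I_n.+1) + ('I_n.+1 * 'I_n.+1) + 'I_n.+1)%type.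
pose u (x : I) t := match x with
  | inl (inl (i, j)) => fA t i j | inl (inr (i, j)) => fB t i j | inr k => rho t k end.
have u_bd : forall x t, nrm (u x t) <= 2.
  move=> [[[i j]|[i j]]|k] t /=; last exact: rho_bd.
    have [_ hb _ _ _] := Hd t; have [h _] := hb i j; apply: le_trans h _; by rewrite ler1n.
  have [_ hb _ _ _] := Hd t; have [_ h] := hb i j; apply: le_trans h _; by rewrite ler1n.
have [phi [hphi Hlim]] := extract u_bd.
have [lim Hlim'] := choice Hlim.
pose A0 : 'M[complex R]_n.+1 := \matrix_(i, j) lim (inl (inl (i, j))).
pose B0 : 'M[complex R]_n.+1 := \matrix_(i, j) lim (inl (inr (i, j))).
pose rl k := lim (inr (inord k)).
have hA : cvg_mx (fun t => fA (phi t)) A0.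
  by move=> i j; rewrite mxE; exact: (Hlim' (inl (inl (i, j)))).
have hB : cvg_mx (fun t => fB (phi t)) B0.
  by move=> i j; rewrite mxE; exact: (Hlim' (inl (inr (i, j)))).
have hr : forall k, (k.+1 < n.+1)%N -> cvgC (fun t => fd (phi t) k.+1 / fd (phi t) k) (rl k).
  move=> k hk; refine (cvgC_ext (Hlim' (inr (inord k))) _) => t /=.
  by rewrite /rho inordK ?hk // ltnW.
have [dA0 uA0 hAi] := cvg_inv hA (fun t => (let: And5 _ _ (conj h _) _ _ := Hd (phi t) in h)).
have [dB0 uB0 hBi] := cvg_inv hB (fun t => (let: And5 _ _ (conj _ h) _ _ := Hd (phi t) in h)).
pose b i := blk rl i.
pose K := (b n).+1.
pose a s := bstart rl n.+1 s.
have aP : forall s, (s < K)%N -> [/\ (a s < n.+1)%N, b (a s) = s &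
      forall i, (i < n.+1)%N -> (b i < s)%N = (i < a s)%N].
  by move=> s hs; apply: bstart_props.
pose X t s (i : nat) := if (b i < s)%N then fd t (a s) / fd t i else 1.
pose Y t s (i : nat) := if (b i < s)%N then 1 else fd t i / fd t (a s).
pose X0 s (i : nat) : complex R := if (b i < s)%N then 0 else 1.
pose Y0 s (i : nat) := if (b i < s)%N then 1 else \prod_(a s <= k < i) rl k.
pose Fr t s := row_mx (diag_mx (\row_(i < n.+1) X t s i)) (diag_mx (\row_(i < n.+1) Y t s i)).
pose Fr0 s := row_mx (diag_mx (\row_(i < n.+1) X0 s i)) (diag_mx (\row_(i < n.+1) Y0 s i)).
pose T t : 'M[complex R]_(n.+1 + n.+1) := block_mx (invmx (fA t)) 0 0 (fB t).
pose T0 : 'M[complex R]_(n.+1 + n.+1) := block_mx (invmx A0) 0 0 B0.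
pose T0' : 'M[complex R]_(n.+1 + n.+1) := block_mx A0 0 0 (invmx B0).
pose G s t := Fr (phi t) s *m T (phi t).
pose G0 s := Fr0 s *m T0.
pose P s := col_mx (G0 s) (0 : 'M[complex R]_(n.+1, n.+1 + n.+1)).
pose beta s t := (fd (phi t) (a s))^-1.
have XY0 : forall s (i : 'I_n.+1), (s < K)%N ->
    (X0 s i == 0) = (b i < s)%N /\ (Y0 s i == 0) = (s < b i)%N.
  move=> s i hs; have [ha hba hlt] := aP s hs.
  rewrite /X0 /Y0; case: ifP => hi.
    by rewrite eqxx oner_eq0 ltnNge ltnW.
  have hai : (a s <= i)%N by move/negbT: hi; rewrite (hlt i (ltn_ord i)) -leqNgt.
  by rewrite oner_eq0 prod_zero // (hba : blk rl (a s) = s).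
have T0inv : T0 *m T0' = 1%:M /\ T0' *m T0 = 1%:M.
  rewrite /T0 /T0' !mulmx_block !mulmx0 !mul0mx !addr0 !add0r mulVmx // mulmxV //.
  by rewrite mulVmx // mulmxV // -scalar_mx_block.
have memP : forall s (v w : 'rV[complex R]_n.+1), (row_mx v w <= P s)%MS = (row_mx (v *m A0) (w *m invmx B0) <= Fr0 s)%MS.
  move=> s v w; rewrite /P col0_sub /G0 (sub_mulinv _ _ T0inv.1 T0inv.2).
  by rewrite /T0' mul_row_block !mulmx0 addr0 add0r.
have domC : forall s (v : 'rV[complex R]_n.+1), (s < K)%N ->
    ((v <= DomP (P s))%MS <-> forall i : 'I_n.+1, (b i < s)%N -> (v *m A0) 0 i = 0).
  move=> s v hs; rewrite /DomP; split.
    case/dom_char => w; rewrite memP => H.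
    have H' := (dom_diag (\row_(i < n.+1) X0 s i) (\row_(i < n.+1) Y0 s i) (v *m A0)).1 (ex_intro _ (w *m invmx B0) H).
    move=> i hi; apply: H'.
    by rewrite mxE; apply/eqP; rewrite (XY0 s i hs).1.
  move=> H.
  have H2 : forall i : 'I_n.+1, (\row_(i < n.+1) X0 s i) 0 i = 0 -> (v *m A0) 0 i = 0.
    by move=> i; rewrite mxE => /eqP; rewrite (XY0 s i hs).1; exact: H.
  have [y hy] := (dom_diag (\row_(i < n.+1) X0 s i) (\row_(i < n.+1) Y0 s i) (v *m A0)).2 H2.
  apply/dom_char; exists (y *m B0); rewrite memP mulmxK //.
have kerC : forall s (v : 'rV[complex R]_n.+1), (s < K)%N ->
    ((v <= KerP (P s))%MS <-> forall i : 'I_n.+1, (b i <= s)%N -> (v *m A0) 0 i = 0).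
  move=> s v hs; rewrite /KerP ker_char memP mul0mx ker_diag.
  have e : forall i : 'I_n.+1, ((\row_(i0 < n.+1) X0 s i0) 0 i == 0) || ((\row_(i0 < n.+1) Y0 s i0) 0 i != 0) = (b i <= s)%N.
    by move=> i; rewrite !mxE (XY0 s i hs).1 (XY0 s i hs).2 -leqNgt orb_idl //; exact: ltnW.
  by split => H i; [rewrite -e | rewrite e]; apply: H.
have imC : forall s (w : 'rV[complex R]_n.+1), (s < K)%N ->
    ((w <= ImP (P s))%MS <-> forall i : 'I_n.+1, (s < b i)%N -> (w *m invmx B0) 0 i = 0).
  move=> s w hs; rewrite /ImP; split.
    case/im_char => v; rewrite memP => H.
    have H' := (im_diag (\row_(i < n.+1) X0 s i) (\row_(i < n.+1) Y0 s i) (w *m invmx B0)).1 (ex_intro _ (v *m A0) H).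
    move=> i hi; apply: H'.
    by rewrite mxE; apply/eqP; rewrite (XY0 s i hs).2.
  move=> H.
  have H2 : forall i : 'I_n.+1, (\row_(i < n.+1) Y0 s i) 0 i = 0 -> (w *m invmx B0) 0 i = 0.
    by move=> i; rewrite mxE => /eqP; rewrite (XY0 s i hs).2; exact: H.
  have [x hx] := (im_diag (\row_(i < n.+1) X0 s i) (\row_(i < n.+1) Y0 s i) (w *m invmx B0)).2 H2.
  apply/im_char; exists (x *m invmx A0); rewrite memP mulmxKV //.
have indefC : forall s (w : 'rV[complex R]_n.+1), (s < K)%N ->
    ((w <= IndefP (P s))%MS <-> forall i : 'I_n.+1, (s <= b i)%N -> (w *m invmx B0) 0 i = 0).
  move=> s w hs; rewrite /IndefP indef_char memP mul0mx indef_diag.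
  have e : forall i : 'I_n.+1, ((\row_(i0 < n.+1) Y0 s i0) 0 i == 0) || ((\row_(i0 < n.+1) X0 s i0) 0 i != 0) = (s <= b i)%N.
    by move=> i; rewrite !mxE (XY0 s i hs).1 (XY0 s i hs).2 -leqNgt orb_idl //; exact: ltnW.
  by split => H i; [rewrite -e | rewrite e]; apply: H.
have rankP : forall s, (s < K)%N -> \rank (P s) = n.+1.
  move=> s hs; rewrite /P rank_col0 /G0 mxrankMfree; last first.
    by rewrite row_free_unit; exact: (mulmx1_unit T0inv.1).1.
  apply/eqP; rewrite eqn_leq rank_leq_row /=.
  pose Y' := \row_(i < n.+1) (if (b i < s)%N then 1 else 0 : complex R).
  have e : Fr0 s *m col_mx (diag_mx (\row_i X0 s i)) (diag_mx Y') = 1%:M.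
    rewrite /Fr0 mul_row_col !mul_diag_mx; apply/matrixP => i j; rewrite !mxE.
    case: (i == j); last by rewrite !mulr0n !mulr0 addr0.
    by rewrite !mulr1n /X0 /Y0; case: ifP => _; rewrite ?mul0r ?mulr0 ?add0r ?mulr1 ?mul1r ?addr0.
  by have := mxrankM_maxl (Fr0 s) (col_mx (diag_mx (\row_i X0 s i)) (diag_mx Y')); rewrite e mxrank1.
have rkP : forall s, (s < K)%N -> (0 < rk (P s))%N.
  move=> s hs; rewrite /rk subn_gt0.
  have [ha hba hlt] := aP s hs.
  suff : (KerP (P s) < DomP (P s))%MS by rewrite ltmxErank => /andP[].
  rewrite ltmxE; apply/andP; split.
    apply/row_subP => i; apply/(domC _ _ hs).
    have := (kerC _ _ hs).1 (row_sub i (KerP (P s))) => H j hj; apply: H; exact: ltnW.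
  apply/negP => hDK.
  pose v : 'rV[complex R]_n.+1 := delta_mx 0 (Ordinal ha) *m invmx A0.
  have vA : v *m A0 = delta_mx 0 (Ordinal ha) by rewrite /v mulmxKV.
  have vD : (v <= DomP (P s))%MS.
    apply/(domC _ _ hs) => i hi; rewrite vA mxE eqxx /=; case: eqP => // ei.
    by move: hi; rewrite ei /= hba ltnn.
  have := (kerC s v hs).1 (submx_trans vD hDK) (Ordinal ha).
  by rewrite vA mxE !eqxx /= hba leqnn => /(_ isT) /eqP; rewrite oner_eq0.
exists phi, K, P, beta; split.
- exact: hphi.
- split => //.
  + by move=> s hs; split; [exact: rankP | exact: rkP].
  + move=> s hs; have hs' : (s < K)%N := ltn_trans (ltnSn s) hs.
    split; apply: eqmx_vec => v.
      rewrite (kerC _ _ hs') (domC _ _ hs).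
      by split => H i hi; apply: H.
    rewrite (imC _ _ hs') (indefC _ _ hs).
    by split => H i hi; apply: H.
  + apply: eqmx_vec => v; rewrite (domC _ _ (ltn0Sn _)); split => _; first exact: submx1.
    by move=> i.
  + apply: eqmx_vec => w; rewrite (imC _ _ (ltnSn _)); split => _; first exact: submx1.
    move=> i hi; exfalso; move: hi; rewrite ltnNge blk_mono //; exact: (leq_ord i).
- move=> s j hs; rewrite invr_eq0 dnz //; by have [ha _ _] := aP s hs.
move=> s hs; have [ha hba hlt] := aP s hs.
have dA : forall j (k : nat), (k <= a s)%N -> fd j k != 0.
  by move=> j k hk; apply: dnz; exact: leq_ltn_trans hk ha.
exists (G s), (G0 s); split.
- move=> t; set j := phi t.
  have [eM _ [detA _] _ _] := Hd j.
  have uA : fA j \in unitmx.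
    rewrite unitmxE unitfE; apply/eqP => e; move: detA; rewrite e expr0n /= => /eqP.
    by rewrite eq_sym oner_eq0.
  pose E := diag_mx (\row_(i < n.+1) X j s i) *m invmx (fA j).
  have eY : diag_mx (\row_(i < n.+1) Y j s i) =
      beta s t *: (diag_mx (\row_(i < n.+1) X j s i) *m diag_mx (\row_(i < n.+1) fd j i)).
    apply/matrixP => i k; rewrite mul_diag_mx !mxE.
    case: (i == k); last by rewrite !mulr0n !mulr0.
    have di : fd j i != 0 by apply: dnz.
    have da : fd j (a s) != 0 by apply: dA.
    rewrite !mulr1n /X /Y /beta -/j; case: ifP => _.
      by rewrite divfK // mulVf.
    by rewrite mul1r mulrC.
  have eG : G s t = E *m graph (beta s t *: g j).
    rewrite /G /Fr /T -/j mul_row_block !mulmx0 addr0 add0r /graph trmxZ'.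
    rewrite (_ : (g j)^T = M j) // eM mul_mx_row mulmx1 eY /E.
    congr row_mx; rewrite -scalemxAl -scalemxAr; congr (_ *: _).
    by rewrite !mulmxA mulmxKV.
  have uE : E \in unitmx.
    rewrite /E unitmx_mul unitmx_inv uA andbT unitmxE det_diag unitfE.
    apply/prodf_neq0 => i _; rewrite mxE /X; case: ifP => _; last exact: oner_neq0.
    by rewrite mulf_neq0 // ?invr_eq0 dnz.
  by rewrite eG; apply/eqmxP; apply: eqmxMfull; rewrite row_full_unit.
- by apply: eqmx_vec => v; rewrite /P col0_sub.
have hX : forall i : 'I_n.+1, cvgC (fun t => X (phi t) s i) (X0 s i).
  move=> i; rewrite /X /X0; case: ifP => hi.
    have hia : (i <= a s)%N by rewrite ltnW // -hlt.
    have e : forall t, \prod_(i <= k < a s) (fd (phi t) k.+1 / fd (phi t) k) = fd (phi t) (a s) / fd (phi t) i.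
      by move=> t; rewrite telescope // => k /andP[_ hk]; apply: dA.
    have -> : (0 : complex R) = \prod_(i <= k < a s) rl k.
      by apply/esym/eqP; rewrite prod_zero // (hba : blk rl (a s) = s).
    refine (cvgC_ext (cvgC_prod_nat _) e) => k /andP[_ hk]; apply: hr.
    by apply: leq_ltn_trans hk ha.
  exact: cvgC_cst.
have hY : forall i : 'I_n.+1, cvgC (fun t => Y (phi t) s i) (Y0 s i).
  move=> i; rewrite /Y /Y0; case: ifP => hi; first exact: cvgC_cst.
  have hai : (a s <= i)%N by move/negbT: hi; rewrite (hlt i (ltn_ord i)) -leqNgt.
  have e : forall t, \prod_(a s <= k < i) (fd (phi t) k.+1 / fd (phi t) k) = fd (phi t) i / fd (phi t) (a s).
    move=> t; rewrite telescope // => k /andP[_ hk]; apply: dnz.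
    exact: leq_ltn_trans hk (ltn_ord i).
  refine (cvgC_ext (cvgC_prod_nat _) e) => k /andP[_ hk]; apply: hr.
  exact: leq_ltn_trans hk (ltn_ord i).
apply: cvg_mx_mul.
  exact: (cvg_row_mx (cvg_diag hX) (cvg_diag hY)).
exact: (cvg_block hAi (cvg_mx_cst 0) (cvg_mx_cst 0) hB).
Qed.
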